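(* Let $p$ be a prime, $q=p^r$ with $r$ a power of two, $n\ge1$, let $\mathscr{C}\subseteq\mathrm{GF}(q^2)^n$ be a scalable code and $\mathscr{B}$ a basis of $\mathrm{GF}(q^2)$ over $\mathrm{GF}(q)$. Then for every integer $l$ with $1\le l\le r-1$ or $r+1\le l\le 2r-1$, $\mathrm{Im}_{\mathscr{B}}(\mathscr{C})$ is self-orthogonal w.r.t. $\tilde h_l(x,y)=\sum_{i=1}^{2n}x_iy_i^{p^l}$ on $\mathrm{GF}(q)^{2n}$ if and only if $\mathrm{Tr}(\mathscr{C})$ is self-orthogonal w.r.t. $h_l(x,y)=\sum_{i=1}^n x_iy_i^{p^l}$ on $\mathrm{GF}(q)^n$.
   Context: $\mathrm{Tr}:\mathrm{GF}(q^2)\to\mathrm{GF}(q)$, $\mathrm{Tr}(a)=a+a^q$. The dual basis of a basis $\{\gamma_1,\gamma_2\}$ is the unique basis $\{\beta_1,\beta_2\}$ with $\mathrm{Tr}(\gamma_i\beta_j)=\delta_{ij}$. A code $\mathscr{C}\subseteq\mathrm{GF}(q^2)^n$ is scalable if $x\in\mathscr{C}\Rightarrow\alpha x\in\mathscr{C}$ for all $\alpha\in\mathrm{GF}(q^2)$. For a basis $\mathscr{B}$ with dual basis $\{\beta_1,\beta_2\}$, $\mathrm{Im}_{\mathscr{B}}(\mathscr{C})=\{(\mathrm{Tr}(\beta_1x_1),\ldots,\mathrm{Tr}(\beta_1x_n),\mathrm{Tr}(\beta_2x_1),\ldots,\mathrm{Tr}(\beta_2x_n)):x\in\mathscr{C}\}$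 and $\mathrm{Tr}(\mathscr{C})=\{(\mathrm{Tr}(x_1),\ldots,\mathrm{Tr}(x_n)):x\in\mathscr{C}\}$. A code $D$ is self-orthogonal w.r.t. a form $g$ if $g(x,y)=0$ for all $x,y\in D$. *)

(* Defs.v *)
(* GF(q^2) is a finite field L with #|L| = q^2; GF(q) is its
   unique subfield of order q, i.e. the set of a : L with a ^+ q = a. *)
From HB Require Import structures.
From mathcomp Require Import all_boot all_order all_algebra all_field.
Set Implicit Arguments. Unset Strict Implicit. Unset Printing Implicit Defensive.
Import GRing.Theory.
Local Open Scope ring_scope.

Section Defs.
Variable L : finFieldType.

Definition inGFq (q : nat) (a : L) : Prop := a ^+ q = a.

Definition Trq (q : nat) (a : L) : L := a + a ^+ q.

(* {g1, g2} is a basis of L over GF(q) (L has dimension 2 over GF(q)) *)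
Definition is_basis (q : nat) (g1 g2 : L) : Prop :=
  forall a b : L, inGFq q a -> inGFq q b -> a * g1 + b * g2 = 0 -> a = 0 /\ b = 0.

Definition is_dual_basis (q : nat) (g1 g2 b1 b2 : L) : Prop :=
  [/\ Trq q (g1 * b1) = 1, Trq q (g1 * b2) = 0,
      Trq q (g2 * b1) = 0 & Trq q (g2 * b2) = 1].

Definition scalable_code (n : nat) (C : {set 'rV[L]_n}) : Prop :=
  forall x, x \in C -> forall a : L, a *: x \in C.

Definition ImB (q : nat) (b1 b2 : L) (n : nat) (C : {set 'rV[L]_n})
  : {set 'rV[L]_(n + n)} :=
  [set row_mx (map_mx (fun z => Trq q (b1 * z)) x)
              (map_mx (fun z => Trq q (b2 * z)) x) | x in C].

Definition TrC (q : nat) (n : nat) (C : {set 'rV[L]_n}) : {set 'rV[L]_n} :=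
  [set map_mx (Trq q) x | x in C].

Definition hform (m e : nat) (x y : 'rV[L]_m) : L :=
  \sum_(i < m) x 0 i * (y 0 i) ^+ e.

Definition self_orth (m : nat) (f : 'rV[L]_m -> 'rV[L]_m -> L)
  (D : {set 'rV[L]_m}) : Prop :=
  forall x y, x \in D -> y \in D -> f x y = 0.

End Defs.

(* Main.v *)
Require Import Defs.
From HB Require Import structures.
From mathcomp Require Import all_boot all_order all_algebra all_field.
From mathcomp Require Import ring zify.
Import GRing.Theory.
Local Open Scope ring_scope.

Lemma frobD {L : fieldType} {p : nat} (m : nat) (hp : p \in [pchar L]) (x y : L) :
  (x + y) ^+ (p ^ m) = x ^+ (p ^ m) + y ^+ (p ^ m).
Proof.
elim: m => [|m IH]; first by rewrite expn0 !expr1.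
rewrite expnSr !exprM IH.
by rewrite -!(pFrobenius_autE hp) rmorphD.
Qed.

Lemma frobN1 {L : fieldType} {p : nat} (m : nat) (hp : p \in [pchar L]) :
  (-1 : L) ^+ (p ^ m) = -1.
Proof.
have p0 : (0 < p ^ m)%N by rewrite expn_gt0 prime_gt0 // (pcharf_prime hp).
have := frobD m hp 1 (-1).
rewrite subrr expr0n eqn0Ngt p0 /= expr1n => /eqP.
by rewrite eq_sym addrC addr_eq0 => /eqP.
Qed.

Lemma iter_frob {L : fieldType} (p n : nat) (t : L) :
  iter n (fun x => x ^+ p) t = t ^+ (p ^ n).
Proof.
elim: n => [|n IH] /=; first by rewrite expn0 expr1.
by rewrite IH expnSr exprM.
Qed.

Lemma iter_mul_fix {T : Type} {f : T -> T} {t d} c :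
  iter d f t = t -> iter (c * d) f t = t.
Proof.
move=> h; elim: c => [|c IH]; first by rewrite mul0n.
by rewrite mulSn iterD IH h.
Qed.

Lemma iter_gcd_fix {T : Type} {f : T -> T} {t a b} :
  iter a f t = t -> iter b f t = t -> iter (gcdn a b) f t = t.
Proof.
elim: a {-2}a (leqnn a) b => [|N IH] a aN b ha hb.
  by move: aN; rewrite leqn0 => /eqP ->; rewrite gcd0n.
rewrite gcdnE; case: eqP => [//|/eqP a0].
apply: IH => //.
  by rewrite -ltnS; apply: leq_trans aN; rewrite ltn_mod lt0n.
move: hb; rewrite {1}(divn_eq b a) addnC iterD => hb.
by move: hb; rewrite iter_mul_fix.
Qed.

Lemma key {L : fieldType} {p : nat} (m : nat) (hp : p \in [pchar L]) (t : L) :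
  t * t ^+ (p ^ m) = -1 -> t ^+ (p ^ (m + m)) = t.
Proof.
move=> h.
have t0 : t != 0 by apply/eqP => t0; move: h; rewrite t0 mul0r => /eqP; rewrite eq_sym oppr_eq0 oner_eq0.
have hs : t ^+ (p ^ m) = - t^-1.
  by apply: (mulfI t0); rewrite h mulrN divff.
rewrite expnD exprM hs -mulN1r exprMn frobN1 // exprVn hs invrN invrK.
by rewrite mulN1r opprK.
Qed.

Lemma gfq {L : fieldType} {p : nat} (r k m l : nat) (hp : p \in [pchar L]) (t : L) :
  prime p -> r = (2 ^ k)%N -> (0 < l)%N -> (l < 2 * r)%N -> l <> r ->
  (m = l \/ m = r + l)%N ->
  t ^+ (p ^ (r + r)) = t -> t * t ^+ (p ^ m) = -1 -> t ^+ (p ^ r) = t.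
Proof.
move=> pp rk l0 l2 lr hm hr ht.
have h1 := key _ hp _ ht.
rewrite -(iter_frob _ (m + m)) in h1.
rewrite -(iter_frob _ (r + r)) in hr.
have hg := iter_gcd_fix h1 hr.
rewrite !addnn -!muln2 -muln_gcdl in hg.
have : (gcdn m r %| 2 ^ k)%N by rewrite -rk dvdn_gcdr.
move/(dvdn_pfactor _ _ (isT : prime 2)); case => i ik gi.
rewrite -(iter_frob p r t); case: (ltnP i k) => hik.
  have : (gcdn m r * 2 %| r)%N.
    by rewrite gi rk -expnSr dvdn_exp2l.
  case/dvdnP => c ->; exact: iter_mul_fix.
have ei : i = k by apply/eqP; rewrite eqn_leq ik hik.
have : (r %| m)%N by apply/gcdn_idPr; rewrite gi ei -rk.
case: hm => ->; [| rewrite dvdn_addr ?dvdnn //];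
  case/dvdnP => c hc; exfalso; clear -hc l0 l2 lr; subst l; case: c l0 l2 lr => [|[|c]] /=; rewrite ?mul0n ?mul1n //; nia.
Qed.

Ltac gring := repeat match goal with |- context [?x ^+ ?n] =>
  let y := fresh "y" in set y := x ^+ n; clearbody y end; ring.

Theorem corollary2 (L : finFieldType) (p r k n l : nat) (g1 g2 b1 b2 : L)
  (C : {set 'rV[L]_n}) :
  prime p -> r = (2 ^ k)%N -> #|L| = ((p ^ r) ^ 2)%N -> (0 < n)%N ->
  is_basis (p ^ r) g1 g2 -> is_dual_basis (p ^ r) g1 g2 b1 b2 ->
  scalable_code C ->
  ((0 < l < r)%N || (r < l < 2 * r)%N) ->
  (self_orth (@hform L (n + n) (p ^ l)) (ImB (p ^ r) b1 b2 C) <->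
   self_orth (@hform L n (p ^ l)) (TrC (p ^ r) C)).
Proof.
move=> pp rk cardL n0 _ [d11 d12 d21 d22] scal hl.
have [l0 l2 lr] : [/\ (0 < l)%N, (l < 2 * r)%N & l <> r].
  by case/orP: hl => /andP [h1 h2]; split => //; lia.
have hp : p \in [pchar L].
  by apply: (card_finPcharP (n := (r * 2)%N)) => //; rewrite cardL expnM.
have qq : forall z : L, z ^+ (p ^ r * p ^ r) = z.
  by move=> z; rewrite mulnn -cardL expf_card.
have q0 : (0 < p ^ r)%N by rewrite expn_gt0 prime_gt0.
have TrD : forall x y : L, Trq (p ^ r) (x + y) = Trq (p ^ r) x + Trq (p ^ r) y.
  by move=> x y; rewrite /Trq frobD //; gring.
have Tr0 : Trq (p ^ r) (0 : L) = 0 by rewrite /Trq expr0n eqn0Ngt q0 addr0.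
have Tr_sum : forall (F : 'I_n -> L),
    Trq (p ^ r) (\sum_i F i) = \sum_i Trq (p ^ r) (F i).
  by move=> F; apply: (big_morph _ TrD Tr0).
have TrZ : forall c z : L, c ^+ (p ^ r) = c -> Trq (p ^ r) (c * z) = c * Trq (p ^ r) z.
  by move=> c z hc; rewrite /Trq exprMn hc; gring.
have Trnd : forall w : L, (forall a, Trq (p ^ r) (a * w) = 0) -> w = 0.
  move=> w H; apply/eqP; apply: contraT => w0.
  have := H (g1 * b1 / w); rewrite divfK // d11 => /eqP; by rewrite oner_eq0.
have b2n0 : b2 != 0.
  by apply/eqP => b20; move: d22; rewrite b20 mulr0 Tr0 => /eqP; rewrite eq_sym oner_eq0.
pose t := b1 / b2.
have b1t : b1 = t * b2 by rewrite /t divfK.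
have tq : t ^+ (p ^ r) != t.
  apply/negP => /eqP ht; move: d21; rewrite b1t mulrCA TrZ // d22 mulr1 => t0.
  by move: d11; rewrite b1t t0 !mul0r mulr0 Tr0 => /eqP; rewrite eq_sym oner_eq0.
have sinj : forall x y : L, x ^+ (p ^ l) = y ^+ (p ^ l) -> x = y.
  move=> x y hxy; apply/eqP; rewrite -subr_eq0; apply/eqP.
  have : (x - y) ^+ (p ^ l) == 0.
    by rewrite frobD // -mulN1r exprMn frobN1 // hxy mulN1r subrr.
  by rewrite expf_eq0 => /andP [_ /eqP].
have tqs : t ^+ (p ^ r * p ^ l) != t ^+ (p ^ l).
  by apply/negP => /eqP; rewrite exprM => /sinj /eqP; apply/negP.
have hQq : forall z : L, z ^+ (p ^ r * p ^ l * p ^ r) = z ^+ (p ^ l).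
  by move=> z; rewrite mulnAC exprM qq.
have sc : forall a b u v : L,
    Trq (p ^ r) (a * u) * Trq (p ^ r) (b * v) ^+ (p ^ l) =
    Trq (p ^ r) (a * b ^+ (p ^ l) * (u * v ^+ (p ^ l))) +
    Trq (p ^ r) (a * b ^+ (p ^ r * p ^ l) * (u * v ^+ (p ^ r * p ^ l))).
  move=> a b u v; rewrite /Trq frobD // -exprM !exprMn -!exprM !hQq.
  rewrite [(p ^ l * p ^ r)%N]mulnC.
  gring.
pose FF (x y : 'rV[L]_n) := \sum_(i < n) Trq (p ^ r) (x 0 i) * Trq (p ^ r) (y 0 i) ^+ (p ^ l).
pose S1 (x y : 'rV[L]_n) := \sum_(i < n) x 0 i * y 0 i ^+ (p ^ l).
pose S2 (x y : 'rV[L]_n) := \sum_(i < n) x 0 i * y 0 i ^+ (p ^ r * p ^ l).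
have FFsc : forall a b x y, FF (a *: x) (b *: y) =
    Trq (p ^ r) (a * b ^+ (p ^ l) * S1 x y) + Trq (p ^ r) (a * b ^+ (p ^ r * p ^ l) * S2 x y).
  move=> a b x y; rewrite /FF.
  under eq_bigr do rewrite !mxE sc.
  by rewrite big_split /= !mulr_sumr !Tr_sum.
have hTr : forall x y, hform (p ^ l) (map_mx (Trq (p ^ r)) x) (map_mx (Trq (p ^ r)) y) = FF x y.
  by move=> x y; rewrite /hform; apply: eq_bigr => i _; rewrite !mxE.
have hIm : forall x y : 'rV[L]_n,
  hform (p ^ l) (row_mx (map_mx (fun z => Trq (p ^ r) (b1 * z)) x)
                        (map_mx (fun z => Trq (p ^ r) (b2 * z)) x))
                (row_mx (map_mx (fun z => Trq (p ^ r) (b1 * z)) y)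
                        (map_mx (fun z => Trq (p ^ r) (b2 * z)) y))
  = FF (b1 *: x) (b1 *: y) + FF (b2 *: x) (b2 *: y).
  move=> x y; rewrite /hform big_split_ord /=; congr (_ + _); apply: eq_bigr => i _;
  by rewrite ?row_mxEl ?row_mxEr !mxE.
split.
- move=> H X Y /imsetP [x xC ->] /imsetP [y yC ->]; rewrite hTr.
  pose be := b1 * b1 ^+ (p ^ l) + b2 * b2 ^+ (p ^ l).
  pose ga := b1 * b1 ^+ (p ^ r * p ^ l) + b2 * b2 ^+ (p ^ r * p ^ l).
  have E : forall b, b ^+ (p ^ l) * be * S1 x y + b ^+ (p ^ r * p ^ l) * ga * S2 x y = 0.
    move=> b; apply: Trnd => a.
    have := H _ _ (imset_f (fun x => row_mx (map_mx (fun z => Trq (p ^ r) (b1 * z)) x)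
                        (map_mx (fun z => Trq (p ^ r) (b2 * z)) x)) (scal _ xC a))
                  (imset_f (fun x => row_mx (map_mx (fun z => Trq (p ^ r) (b1 * z)) x)
                        (map_mx (fun z => Trq (p ^ r) (b2 * z)) x)) (scal _ yC b)).
    rewrite hIm !scalerA !FFsc -!TrD => <-; congr Trq; rewrite /be /ga !exprMn; gring.
  have rr : (p ^ r * p ^ r = p ^ (r + r))%N by rewrite expnD.
  have trr : t ^+ (p ^ (r + r)) = t by rewrite -rr qq.
  have be0 : be != 0.
    apply/negP => /eqP; rewrite /be b1t exprMn.
    have -> : t * b2 * (t ^+ (p ^ l) * b2 ^+ (p ^ l)) + b2 * b2 ^+ (p ^ l)
      = (b2 * b2 ^+ (p ^ l)) * (t * t ^+ (p ^ l) + 1) by gring.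
    move/eqP; rewrite mulf_eq0 mulf_eq0 expf_eq0 (negbTE b2n0) andbF /= addr_eq0 => /eqP ht.
    by move: tq; rewrite (gfq r k l l hp t pp rk l0 l2 lr (or_introl erefl) trr ht) eqxx.
  have ga0 : ga != 0.
    apply/negP => /eqP; rewrite /ga b1t exprMn.
    have -> : t * b2 * (t ^+ (p ^ r * p ^ l) * b2 ^+ (p ^ r * p ^ l)) + b2 * b2 ^+ (p ^ r * p ^ l)
      = (b2 * b2 ^+ (p ^ r * p ^ l)) * (t * t ^+ (p ^ r * p ^ l) + 1) by gring.
    move/eqP; rewrite mulf_eq0 mulf_eq0 expf_eq0 (negbTE b2n0) andbF /= addr_eq0 => /eqP ht.
    rewrite -expnD in ht.
    by move: tq; rewrite (gfq r k (r + l) l hp t pp rk l0 l2 lr (or_intror erefl) trr ht) eqxx.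
  have E1 := E 1; have Et := E t.
  rewrite !expr1n !mul1r in E1.
  have hS2 : S2 x y = 0.
    have : (t ^+ (p ^ l) - t ^+ (p ^ r * p ^ l)) * ga * S2 x y = 0.
      transitivity (t ^+ (p ^ l) * (be * S1 x y + ga * S2 x y) -
        (t ^+ (p ^ l) * be * S1 x y + t ^+ (p ^ r * p ^ l) * ga * S2 x y)).
        by gring.
      by rewrite E1 Et mulr0 subrr.
    move/eqP; rewrite !mulf_eq0 (negbTE ga0) subr_eq0 eq_sym (negbTE tqs) /=.
    by move/eqP.
  have hS1 : S1 x y = 0.
    by move: E1; rewrite hS2 mulr0 addr0 => /eqP; rewrite mulf_eq0 (negbTE be0) /= => /eqP.
  by rewrite -(scale1r x) -(scale1r y) FFsc hS1 hS2 !mulr0 Tr0 addr0.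
- move=> H X Y /imsetP [x xC ->] /imsetP [y yC ->]; rewrite hIm -!hTr.
  by rewrite !H ?addr0 //; apply: imset_f; apply: scal.
Qed.
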